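(* Let $x,y\in\{a,b\}^*$ be two different words and let $\omega=xy^{-1}\in\mathbf{F}_2$. Then the pair $(x,y)$ can be separated exactly by a 2-state MCQFA (with complex amplitudes) if and only if the image of the word map $f_\omega: SU(2)\times SU(2)\to SU(2)$ contains the matrix $\begin{pmatrix} i & 0\\ 0 & -i\end{pmatrix}$.
   Context: $\mathbf{F}_2$ is the free group on generators $a,b$, i.e. reduced words over $\{a,b,a^{-1},b^{-1}\}$ with concatenation. For a group $G$ and $\omega\in\mathbf{F}_2$, the word map $f_\omega:G\times G\to G$ sends $(g,h)$ to the element obtained from $\omega$ by substituting $g$ for $a$ and $h$ for $b$ (and $g^{-1},h^{-1}$ for $a^{-1},b^{-1}$). $SU(2)$ is the group of $2\times 2$ complex unitary matrices of determinant $1$. A 2-state Moore–Crutchfield quantum finite automaton (MCQFA) over $\{a,b\}$ consists of unitaries $U_a,U_b\in\mathbb{C}^{2\times 2}$, an initial unit vector $|u_0\rangle\in\mathbb{C}^2$ and a set of accepting basis states; on input $w=w_1\cdots w_k$ the final state is $U_{w_k}\cdots U_{w_1}|u_0\rangle$ and the acceptance probability is the sum of the squared moduli of its accepting coordinates. The pair $(x,y)$ is separated exactly if one word is accepted with probability $1$ and the other with probability $0$. *)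

(* Defs.v *)
(* Complex amplitudes: an arbitrary numClosedFieldType C. *)
From HB Require Import structures.
From mathcomp Require Import all_boot all_order all_algebra.
Set Implicit Arguments. Unset Strict Implicit. Unset Printing Implicit Defensive.
Import Order.TTheory GRing.Theory Num.Theory.
Local Open Scope ring_scope.

Inductive letter := La | Lb.

(* letters of the free group F_2: (c, false) = c, (c, true) = c^{-1} *)
Definition fletter := (letter * bool)%type.

Definition pos_word (x : seq letter) : seq fletter := [seq (c, false) | c <- x].

Definition inv_fword (w : seq fletter) : seq fletter :=
  rev [seq (p.1, ~~ p.2) | p <- w].

(* omega = x y^{-1}, as a (possibly non-reduced) word representing the
   element of F_2 *)
Definition omega (x y : seq letter) : seq fletter :=
  pos_word x ++ inv_fword (pos_word y).

Section Defs.
Variable C : numClosedFieldType.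

Definition adjmx (n m : nat) (A : 'M[C]_(n, m)) : 'M[C]_(m, n) :=
  (map_mx Num.conj A)^T.

Definition unitary (A : 'M[C]_2) : Prop := A *m adjmx A = 1%:M.

Definition SU2 (A : 'M[C]_2) : Prop := unitary A /\ \det A = 1.

Definition word_map (w : seq fletter) (g h : 'M[C]_2) : 'M[C]_2 :=
  foldr (fun p M =>
           (let G := if p.1 is La then g else h in
            if p.2 then invmx G else G) *m M) 1%:M w.

Record MCQFA := {
  Ua : 'M[C]_2;
  Ub : 'M[C]_2;
  u0 : 'cV[C]_2;
  acc : {set 'I_2}
}.

Definition MCQFA_wf (M : MCQFA) : Prop :=
  [/\ unitary (Ua M), unitary (Ub M) & \sum_i `|u0 M i 0| ^+ 2 = 1].

Definition final_state (M : MCQFA) (w : seq letter) : 'cV[C]_2 :=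
  foldl (fun v c => (if c is La then Ua M else Ub M) *m v) (u0 M) w.

Definition acc_prob (M : MCQFA) (w : seq letter) : C :=
  \sum_(i in acc M) `|final_state M w i 0| ^+ 2.

Definition separates_exactly (M : MCQFA) (x y : seq letter) : Prop :=
  (acc_prob M x = 1 /\ acc_prob M y = 0) \/ (acc_prob M x = 0 /\ acc_prob M y = 1).

Definition diag_i_mi : 'M[C]_2 :=
  \matrix_(i < 2, j < 2)
    (if i == j then (if i == ord0 then 'i else - 'i) else 0).

End Defs.

(* Main.v *)
Require Import Defs.
From HB Require Import structures.
From mathcomp Require Import all_boot all_order all_algebra.
From mathcomp Require Import ring.
Set Implicit Arguments. Unset Strict Implicit. Unset Printing Implicit Defensive.
Import Order.TTheory GRing.Theory Num.Theory.
Local Open Scope ring_scope.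

Section M2.
Variable C : numClosedFieldType.
Notation i0 := (@ord0 1).
Notation i1 := (@ord_max 1).
Definition mk2 (a b c d : C) : 'M[C]_2 := \matrix_(i < 2, j < 2)
  if i == i0 then (if j == i0 then a else b) else (if j == i0 then c else d).
Definition mkv (a b : C) : 'cV[C]_2 := \col_(i < 2) if i == i0 then a else b.

Lemma ord2P (i : 'I_2) : i = i0 \/ i = i1.
Proof. case: i => [[|[|//]]] Hi; [left|right]; exact: val_inj. Qed.

Lemma mx2E (A : 'M[C]_2) : A = mk2 (A i0 i0) (A i0 i1) (A i1 i0) (A i1 i1).
Proof.
apply/matrixP => i j; rewrite mxE.
by case: (ord2P i) => ->; case: (ord2P j) => ->.
Qed.

Lemma v2E (v : 'cV[C]_2) : v = mkv (v i0 0) (v i1 0).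
Proof.
apply/matrixP => i j; rewrite mxE (ord1 j).
by case: (ord2P i) => ->.
Qed.

Lemma mk2E a b c d :
  [/\ mk2 a b c d i0 i0 = a, mk2 a b c d i0 i1 = b,
      mk2 a b c d i1 i0 = c & mk2 a b c d i1 i1 = d].
Proof. by rewrite !mxE. Qed.

Lemma mkvE a b : mkv a b i0 0 = a /\ mkv a b i1 0 = b.
Proof. by rewrite !mxE. Qed.

Lemma mk2_inj a b c d a' b' c' d' : mk2 a b c d = mk2 a' b' c' d' ->
  [/\ a = a', b = b', c = c' & d = d'].
Proof.
move=> E; have := mk2E a b c d; rewrite E; case: (mk2E a' b' c' d').
by move=> -> -> -> -> [].
Qed.

Lemma mul_mk2 a b c d a' b' c' d' :
  mk2 a b c d *m mk2 a' b' c' d' =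
  mk2 (a * a' + b * c') (a * b' + b * d') (c * a' + d * c') (c * b' + d * d').
Proof.
apply/matrixP => i j; rewrite !mxE !big_ord_recl big_ord0 !mxE /=.
by case: (ord2P i) => ->; case: (ord2P j) => ->; rewrite /= addr0.
Qed.

Lemma mul_mk2v a b c d x y :
  mk2 a b c d *m mkv x y = mkv (a * x + b * y) (c * x + d * y).
Proof.
apply/matrixP => i j; rewrite !mxE !big_ord_recl big_ord0 !mxE /=.
by case: (ord2P i) => ->; rewrite /= addr0.
Qed.

Lemma adj_mk2 a b c d : adjmx (mk2 a b c d) = mk2 a^* c^* b^* d^*.
Proof.
apply/matrixP => i j; rewrite !mxE.
by case: (ord2P i) => ->; case: (ord2P j) => ->.
Qed.

Lemma adj_mkv_mkv a b x y : adjmx (mkv a b) *m mkv x y = (a^* * x + b^* * y)%:M.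
Proof.
apply/matrixP => i j; rewrite (ord1 i) (ord1 j) !mxE !big_ord_recl big_ord0 !mxE /=.
by rewrite addr0.
Qed.

Lemma scale_mk2 k a b c d : k *: mk2 a b c d = mk2 (k * a) (k * b) (k * c) (k * d).
Proof.
apply/matrixP => i j; rewrite !mxE.
by case: (ord2P i) => ->; case: (ord2P j) => ->.
Qed.

Lemma one_mk2 : (1%:M : 'M[C]_2) = mk2 1 0 0 1.
Proof.
apply/matrixP => i j; rewrite !mxE.
by case: (ord2P i) => ->; case: (ord2P j) => ->.
Qed.

Lemma det_mk2 a b c d : \det (mk2 a b c d) = a * d - b * c.
Proof.
rewrite (expand_det_row _ i0) !big_ord_recl big_ord0 /cofactor !det_mx11 !mxE /=.
by rewrite /bump /= expr0 expr1 !mul1r mulN1r addr0 mulrN.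
Qed.


Lemma adjmxM m n p (A : 'M[C]_(m, n)) (B : 'M[C]_(n, p)) :
  adjmx (A *m B) = adjmx B *m adjmx A.
Proof. by rewrite /adjmx map_mxM trmx_mul. Qed.

Lemma adjmxK m n (A : 'M[C]_(m, n)) : adjmx (adjmx A) = A.
Proof. by apply/matrixP => i j; rewrite !mxE conjCK. Qed.

Lemma adjmx1 : adjmx (1%:M : 'M[C]_2) = 1%:M.
Proof. by rewrite one_mk2 adj_mk2 conjC0 conjC1. Qed.

Lemma adjmxZ m n k (A : 'M[C]_(m, n)) : adjmx (k *: A) = k^* *: adjmx A.
Proof. by apply/matrixP => i j; rewrite !mxE rmorphM. Qed.

Lemma det_adjmx (A : 'M[C]_2) : \det (adjmx A) = (\det A)^*.
Proof. by rewrite /adjmx det_tr det_map_mx. Qed.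

Lemma unitaryC (A : 'M[C]_2) : unitary A -> adjmx A *m A = 1%:M.
Proof. by move=> /mulmx1C. Qed.

Lemma invmx_unitary (A : 'M[C]_2) : unitary A -> invmx A = adjmx A.
Proof.
move=> UA; have [uA _] := mulmx1_unit UA.
by rewrite -[invmx A]mulmx1 -UA mulmxA mulVmx // mul1mx.
Qed.

Lemma unitary_adj (A : 'M[C]_2) : unitary A -> unitary (adjmx A).
Proof. by move=> UA; rewrite /unitary adjmxK unitaryC. Qed.

Lemma unitaryM (A B : 'M[C]_2) : unitary A -> unitary B -> unitary (A *m B).
Proof.
move=> UA UB; rewrite /unitary adjmxM mulmxA -(mulmxA A) UB mulmx1 //.
Qed.

Lemma SU2_adj (A : 'M[C]_2) : SU2 A -> SU2 (adjmx A).
Proof. by case=> UA dA; split; [exact: unitary_adj | rewrite det_adjmx dA conjC1]. Qed.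

Lemma SU2M (A B : 'M[C]_2) : SU2 A -> SU2 B -> SU2 (A *m B).
Proof.
case=> UA dA [UB dB]; split; first exact: unitaryM.
by rewrite det_mulmx dA dB mulr1.
Qed.

Lemma SU2_unit (A : 'M[C]_2) : SU2 A -> A \in unitmx.
Proof. by case=> _ dA; rewrite unitmxE dA unitr1. Qed.

Lemma SU2_conj (V A : 'M[C]_2) : unitary V -> SU2 A -> SU2 (adjmx V *m A *m V).
Proof.
move=> UV [UA dA]; split.
  apply: unitaryM; [apply: unitaryM => //; exact: unitary_adj | done].
rewrite !det_mulmx dA mulr1 -det_mulmx unitaryC // det1 //.
Qed.

Definition G2 (g h : 'M[C]_2) (c : letter) := if c is La then g else h.

Lemma wm_pos_cons c x (g h : 'M[C]_2) :
  word_map (pos_word (c :: x)) g h = G2 g h c *m word_map (pos_word x) g h.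
Proof. by []. Qed.

Lemma wm_cat u v (g h : 'M[C]_2) :
  word_map (u ++ v) g h = word_map u g h *m word_map v g h.
Proof.
elim: u => [|p u IH] /=; first by rewrite mul1mx.
by rewrite /word_map /= -/(word_map _ _ _) IH mulmxA.
Qed.


Lemma wm_unit x (g h : 'M[C]_2) : g \in unitmx -> h \in unitmx ->
  word_map (pos_word x) g h \in unitmx.
Proof.
move=> ug uh; elim: x => [|c x IH]; first exact: unitmx1.
by rewrite wm_pos_cons unitmx_mul IH andbT; case: c.
Qed.

Lemma inv_fword_cons c x :
  inv_fword (pos_word (c :: x)) = inv_fword (pos_word x) ++ [:: (c, true)].
Proof. by rewrite /inv_fword /= rev_cons cats1. Qed.

Lemma invmxM2 (A B : 'M[C]_2) : A \in unitmx -> B \in unitmx ->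
  invmx (A *m B) = invmx B *m invmx A.
Proof.
move=> uA uB; have uAB : A *m B \in unitmx by rewrite unitmx_mul uA.
have E : (A *m B) *m (invmx B *m invmx A) = 1%:M.
  by rewrite mulmxA -(mulmxA A) mulmxV // mulmx1 mulmxV.
by rewrite -[invmx B *m _](mulKmx uAB) E mulmx1.
Qed.

Lemma wm_inv_pos y (g h : 'M[C]_2) : g \in unitmx -> h \in unitmx ->
  word_map (inv_fword (pos_word y)) g h = invmx (word_map (pos_word y) g h).
Proof.
move=> ug uh; elim: y => [|c y IH]; first by rewrite invmx1.
rewrite inv_fword_cons wm_cat IH wm_pos_cons.
have uc : G2 g h c \in unitmx by case: c.
have uy := wm_unit y ug uh.
rewrite invmxM2 //; congr (_ *m _).
by rewrite /word_map /= mulmx1; clear uc; case: c.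
Qed.

Lemma wm_omega x y (g h : 'M[C]_2) : g \in unitmx -> h \in unitmx ->
  word_map (omega x y) g h =
  word_map (pos_word x) g h *m invmx (word_map (pos_word y) g h).
Proof. by move=> ug uh; rewrite /omega wm_cat wm_inv_pos. Qed.

Lemma wm_pos_conj x (V g h : 'M[C]_2) : unitary V ->
  word_map (pos_word x) (adjmx V *m g *m V) (adjmx V *m h *m V) =
  adjmx V *m word_map (pos_word x) g h *m V.
Proof.
move=> UV; elim: x => [|c x IH]; first by rewrite mulmx1 unitaryC.
rewrite !wm_pos_cons IH.
have -> : G2 (adjmx V *m g *m V) (adjmx V *m h *m V) c = adjmx V *m G2 g h c *m V
  by case: c.
by rewrite !mulmxA -(mulmxA _ V) UV mulmx1.
Qed.

Lemma wm_pos_scale x (a b : C) (g h : 'M[C]_2) :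
  exists s, word_map (pos_word x) (a *: g) (b *: h) = s *: word_map (pos_word x) g h.
Proof.
elim: x => [|c x [s IH]]; first by exists 1; rewrite scale1r.
rewrite !wm_pos_cons IH.
exists ((if c is La then a else b) * s).
by case: c; rewrite -scalemxAl -scalemxAr scalerA.
Qed.

Lemma wm_pos_SU2 x (g h : 'M[C]_2) : SU2 g -> SU2 h -> SU2 (word_map (pos_word x) g h).
Proof.
move=> sg sh; elim: x => [|c x IH].
  by split; [rewrite /unitary adjmx1 mulmx1 | rewrite det1].
by rewrite wm_pos_cons; apply: SU2M => //; case: c.
Qed.

Definition Uof (M : MCQFA C) (c : letter) := if c is La then Ua M else Ub M.
Definition Aprod (M : MCQFA C) (x : seq letter) :=
  foldl (fun A c => Uof M c *m A) 1%:M x.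

Lemma foldl_mul (U : letter -> 'M[C]_2) x : forall n (v : 'M[C]_(2, n)),
  foldl (fun v c => U c *m v) v x = foldl (fun A c => U c *m A) 1%:M x *m v.
Proof.
elim: x => [|c x IH] n v /=; first by rewrite mul1mx.
by rewrite (IH _ (U c *m v)) (IH _ (U c *m 1%:M)) mulmx1 mulmxA.
Qed.

Lemma final_Aprod M x : final_state M x = Aprod M x *m u0 M.
Proof. exact: foldl_mul. Qed.

Lemma adj_Aprod M x :
  adjmx (Aprod M x) = word_map (pos_word x) (adjmx (Ua M)) (adjmx (Ub M)).
Proof.
elim: x => [|c x IH]; first by rewrite adjmx1.
rewrite wm_pos_cons -IH /Aprod /= foldl_mul mulmx1 -/(Aprod M x) adjmxM.
by case: c.
Qed.

Definition ip (v w : 'cV[C]_2) := (adjmx v *m w) 0 0.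

Lemma sum2 (F : 'I_2 -> C) : \sum_i F i = F i0 + F i1.
Proof.
rewrite !big_ord_recl big_ord0 addr0; congr (_ + F _); exact: val_inj.
Qed.

Lemma nrm_ip (v : 'cV[C]_2) : \sum_i `|v i 0| ^+ 2 = ip v v.
Proof.
rewrite sum2 /ip (v2E v) adj_mkv_mkv !mxE !normCK eqxx mulr1n; ring.
Qed.

Lemma ip_unitary (U : 'M[C]_2) v w : unitary U -> ip (U *m v) (U *m w) = ip v w.
Proof.
by move=> UU; rewrite /ip adjmxM mulmxA -(mulmxA _ _ U) unitaryC // mulmx1.
Qed.

Lemma Aprod_unitary M x : MCQFA_wf M -> unitary (Aprod M x).
Proof.
case=> UA UB _; elim: x => [|c x IH]; first by rewrite /unitary adjmx1 mulmx1.
rewrite /Aprod /= foldl_mul mulmx1 -/(Aprod M x); apply: unitaryM => //.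
by case: c.
Qed.

Lemma sq0 (z : C) : `|z| ^+ 2 = 0 -> z = 0.
Proof. by move/eqP; rewrite expf_eq0 normr_eq0 => /andP[_ /eqP]. Qed.

Lemma sumr1_l (p q : C) : p + q = 1 -> p = 1 -> q = 0.
Proof. by move=> E P; move: E; rewrite P -{2}[1]addr0 => /addrI. Qed.

Lemma sumr1_r (p q : C) : p + q = 1 -> q = 1 -> p = 0.
Proof. by rewrite addrC; exact: sumr1_l. Qed.

Lemma sep_orth M x y : MCQFA_wf M -> separates_exactly M x y ->
  ip (final_state M x) (final_state M y) = 0.
Proof.
move=> wf sep.
have nrm1 w : `|final_state M w i0 0| ^+ 2 + `|final_state M w i1 0| ^+ 2 = 1.
  rewrite -(sum2 (fun i => `|final_state M w i 0| ^+ 2)) nrm_ip final_Aprod ip_unitary; last exact: Aprod_unitary.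
  by case: wf => _ _ <-; rewrite nrm_ip.
have accE w : acc_prob M w =
   (if i0 \in acc M then `|final_state M w i0 0| ^+ 2 else 0) +
   (if i1 \in acc M then `|final_state M w i1 0| ^+ 2 else 0).
  by rewrite /acc_prob big_mkcond sum2.
have nx := nrm1 x; have ny := nrm1 y.
rewrite /ip (v2E (final_state M x)) (v2E (final_state M y)) adj_mkv_mkv mxE eqxx mulr1n.
case: sep => [[px py]|[px py]]; rewrite accE in px; rewrite accE in py; move: px py;
  case: (i0 \in acc M); case: (i1 \in acc M); rewrite ?add0r ?addr0 => px py.
all: try (by move: (oner_neq0 C); rewrite -?px -?py ?nx ?ny eqxx).
all: first [ rewrite (sq0 py) (sq0 (sumr1_l nx px)) | rewrite (sq0 py) (sq0 (sumr1_r nx px))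
  | rewrite (sq0 px) (sq0 (sumr1_l ny py)) | rewrite (sq0 px) (sq0 (sumr1_r ny py)) ].
all: by rewrite ?conjC0 ?mulr0 ?mul0r ?addr0 ?add0r.
Qed.

Lemma cM (a b : C) : (a * b)^* = a^* * b^*. Proof. exact: rmorphM. Qed.
Lemma cN (a : C) : (- a)^* = - a^*. Proof. exact: rmorphN. Qed.

Definition r2 : C := (sqrtC 2)^-1.

Lemma r2C : r2^* = r2.
Proof.
apply: conj_Creal; apply: ger0_real; rewrite invr_ge0 sqrtC_ge0; exact: ler0n.
Qed.

Lemma r2r2 : 2 * (r2 * r2) = 1.
Proof. by rewrite /r2 -invfM -expr2 sqrtCK mulfV // pnatr_eq0. Qed.

Lemma ii : 'i * 'i = -1 :> C.
Proof. by rewrite -expr2 sqrCi. Qed.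

Lemma Dmx : diag_i_mi C = mk2 'i 0 0 (- 'i).
Proof. by rewrite (mx2E (diag_i_mi C)) !mxE. Qed.

Definition Bs : 'M[C]_2 := mk2 r2 r2 (- 'i * r2) ('i * r2).
Definition wv : 'cV[C]_2 := mkv r2 r2.

Lemma Bs_unitary : unitary Bs.
Proof.
rewrite /unitary /Bs adj_mk2 mul_mk2 one_mk2 !cM !cN conjCi r2C.
have h1 := r2r2; have h2 := ii.
congr mk2; ring: h1 h2.
Qed.

Lemma Bs_w : Bs *m wv = mkv 1 0.
Proof.
rewrite /Bs /wv mul_mk2v; have h1 := r2r2; have h2 := ii.
congr mkv; ring: h1 h2.
Qed.

Lemma Bs_D_w : Bs *m diag_i_mi C *m wv = mkv 0 1.
Proof.
rewrite Dmx /Bs /wv mul_mk2 mul_mk2v; have h1 := r2r2; have h2 := ii.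
congr mkv; ring: h1 h2.
Qed.

Lemma ip_wv : ip wv wv = 1.
Proof.
rewrite /ip /wv adj_mkv_mkv mxE eqxx mulr1n r2C; have h1 := r2r2.
ring: h1.
Qed.

Lemma backward x y (g h : 'M[C]_2) : SU2 g -> SU2 h ->
  word_map (omega x y) g h = diag_i_mi C ->
  exists M : MCQFA C, MCQFA_wf M /\ separates_exactly M x y.
Proof.
move=> sg sh.
have sX := wm_pos_SU2 x sg sh; have sY := wm_pos_SU2 y sg sh.
rewrite wm_omega ?SU2_unit // invmx_unitary; last by case: sY.
set X := word_map (pos_word x) g h in sX *; set Y := word_map (pos_word y) g h in sY *.
move=> HD.
have UX : unitary X by case: sX.
have UY : unitary Y by case: sY.
set P := adjmx X *m adjmx Bs.
have UP : unitary P by apply: unitaryM; apply: unitary_adj => //; exact: Bs_unitary.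
pose g' := adjmx P *m g *m P; pose h' := adjmx P *m h *m P.
have sg' : SU2 g' by exact: SU2_conj.
have sh' : SU2 h' by exact: SU2_conj.
pose M := {| Ua := adjmx g'; Ub := adjmx h'; u0 := Bs *m X *m wv; acc := [set i0] |}.
have Pu : P *m u0 M = wv.
  rewrite /= /P -!mulmxA (mulmxA (adjmx Bs)) (unitaryC Bs_unitary) mul1mx.
  by rewrite mulmxA (unitaryC UX) mul1mx.
have finE z : final_state M z =
    adjmx P *m adjmx (word_map (pos_word z) g h) *m wv.
  rewrite final_Aprod -[Aprod M z]adjmxK adj_Aprod /= !adjmxK wm_pos_conj //.
  rewrite !adjmxM !adjmxK -!mulmxA (mulmxA (adjmx Bs)) (unitaryC Bs_unitary) mul1mx.
  by rewrite (mulmxA (adjmx X)) (unitaryC UX) mul1mx.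
have fx : final_state M x = mkv 1 0.
  rewrite finE -/X /P adjmxM !adjmxK -!mulmxA (mulmxA X) UX mul1mx.
  exact: Bs_w.
have fy : final_state M y = mkv 0 1.
  rewrite finE -/Y /P adjmxM !adjmxK -!mulmxA (mulmxA X) HD mulmxA.
  exact: Bs_D_w.
exists M; split.
  split; [exact: unitary_adj (proj1 sg') | exact: unitary_adj (proj1 sh') |].
  rewrite nrm_ip /= -mulmxA (ip_unitary _ _ Bs_unitary) (ip_unitary _ _ UX).
  exact: ip_wv.
left; rewrite /acc_prob /= !big_set1 fx fy !mxE /=.
by rewrite normr1 normr0 expr1n expr0n.
Qed.

Lemma cX (a : C) n : (a ^+ n)^* = a^* ^+ n. Proof. exact: rmorphXn. Qed.

Lemma normalize (U : 'M[C]_2) : unitary U -> exists c : C, SU2 (c *: adjmx U).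
Proof.
move=> UU; set d := \det U.
have dd : d * d^* = 1.
  by rewrite /d -det_adjmx -det_mulmx UU det1.
pose c := sqrtC d.
have c2 : c ^+ 2 = d by exact: sqrtCK.
have cc : c * c^* = 1.
  have t2 : (c * c^*) ^+ 2 = 1 by rewrite exprMn -cX c2.
  move/eqP: t2; rewrite sqrf_eq1 => /orP[/eqP //| /eqP E].
  by have := mul_conjC_ge0 c; rewrite E ler0N1.
exists c; split.
  rewrite /unitary adjmxZ adjmxK -scalemxAl -scalemxAr unitaryC // scalerA.
  by rewrite cc scale1r.
by rewrite detZ det_adjmx c2.
Qed.

Lemma Qmx_unitary (u1 u2 : C) : u1^* * u1 + u2^* * u2 = 1 ->
  unitary (mk2 u1 (- u2^*) u2 u1^*).
Proof.
move=> H; have H' : u1^* * u1 = 1 - u2^* * u2 by rewrite -H addrK.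
rewrite /unitary adj_mk2 mul_mk2 one_mk2 !cN !conjCK.
congr mk2; ring: H'.
Qed.

Lemma Qmx_entry (u1 u2 : C) (Z : 'M[C]_2) :
  (adjmx (mk2 u1 (- u2^*) u2 u1^*) *m Z *m mk2 u1 (- u2^*) u2 u1^*) i0 i0 =
  (adjmx (mkv u1 u2) *m (Z *m mkv u1 u2)) 0 0.
Proof.
rewrite (mx2E Z) adj_mk2 !mul_mk2 mul_mk2v adj_mkv_mkv !mxE /= mulr1n.
ring.
Qed.

Lemma fin_N' (b c d : C) : SU2 (mk2 0 b c d) ->
  exists R : 'M[C]_2, unitary R /\ adjmx R *m mk2 0 b c d *m R = diag_i_mi C.
Proof.
move=> [UN dN]; move: UN dN.
rewrite /unitary adj_mk2 mul_mk2 one_mk2 det_mk2 => /mk2_inj[e1 e2 e3 e4] dt.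
move: e1 e2 dt; rewrite !mul0r !add0r => e1 e2 dt.
have dc0 : d^* = 0.
  have : d^* * (b * b^*) = b^* * (b * d^*) by ring.
  by rewrite e1 e2 mulr1 mulr0.
have d0 : d = 0 by apply/eqP; rewrite -conjC_eq0 dc0.
have dt' : b * c = -1 by rewrite -dt opprK.
have bc : b = - c^*.
  have : b^* * (b * c) = (b * b^*) * c by ring.
  rewrite e1 dt' mul1r mulrN1 => Eb.
  by rewrite -[b]conjCK -cN -Eb opprK.
have ccs : c * c^* = 1.
  by move: e1; rewrite bc cN conjCK mulrNN mulrC.
rewrite d0 bc.
pose R0 := mk2 1 1 (- 'i * c) ('i * c).
have h2 := ii.
have E1 : R0 *m adjmx R0 = 2 *: 1%:M.
  rewrite /R0 adj_mk2 mul_mk2 one_mk2 scale_mk2 !cM !cN conjCi conjC1.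
  move: h2 ccs; move: ('i : C) (c^*) => I cs h2 ccs.
  congr mk2; ring: h2 ccs.
have E2 : adjmx R0 *m mk2 0 (- c^*) c 0 *m R0 = 2 *: diag_i_mi C.
  rewrite /R0 Dmx adj_mk2 !mul_mk2 scale_mk2 !cM !cN conjCi conjC1.
  move: h2 ccs; move: ('i : C) (c^*) => I cs h2 ccs.
  congr mk2; ring: h2 ccs.
exists (r2 *: R0); split.
  rewrite /unitary adjmxZ r2C -scalemxAl -scalemxAr scalerA E1 scalerA.
  by rewrite [_ * 2]mulrC r2r2 scale1r one_mk2.
rewrite adjmxZ r2C -!scalemxAl -scalemxAr scalerA E2 scalerA.
by rewrite [_ * 2]mulrC r2r2 scale1r.
Qed.

Lemma fin_N (N : 'M[C]_2) : SU2 N -> N i0 i0 = 0 ->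
  exists R : 'M[C]_2, unitary R /\ adjmx R *m N *m R = diag_i_mi C.
Proof.
move=> sN N0; have E := mx2E N; rewrite N0 in E; rewrite E; rewrite E in sN.
exact: fin_N'.
Qed.

Lemma forward x y (M : MCQFA C) : MCQFA_wf M -> separates_exactly M x y ->
  exists g h : 'M[C]_2, SU2 g /\ SU2 h /\ word_map (omega x y) g h = diag_i_mi C.
Proof.
move=> wf sep.
have orth := sep_orth wf sep.
case: (wf) => UA UB nu.
have [ca sa] := normalize UA; have [cb sb] := normalize UB.
set ga := ca *: adjmx (Ua M) in sa *; set gb := cb *: adjmx (Ub M) in sb *.
have [sx Ex] := wm_pos_scale x ca cb (adjmx (Ua M)) (adjmx (Ub M)).
have [sy Ey] := wm_pos_scale y ca cb (adjmx (Ua M)) (adjmx (Ub M)).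
rewrite -adj_Aprod in Ex; rewrite -adj_Aprod in Ey.
set X := word_map (pos_word x) ga gb in Ex; set Y := word_map (pos_word y) ga gb in Ey.
have sX : SU2 X := wm_pos_SU2 x sa sb.
have sY : SU2 Y := wm_pos_SU2 y sa sb.
set W := X *m adjmx Y.
have sW : SU2 W := SU2M sX (SU2_adj sY).
have nu' : (u0 M i0 0)^* * u0 M i0 0 + (u0 M i1 0)^* * u0 M i1 0 = 1.
  move: nu; rewrite nrm_ip /ip (v2E (u0 M)) adj_mkv_mkv mxE eqxx mulr1n !mxE.
  by [].
set Q := mk2 (u0 M i0 0) (- (u0 M i1 0)^*) (u0 M i1 0) (u0 M i0 0)^*.
have UQ : unitary Q := Qmx_unitary nu'.
set N := adjmx Q *m W *m Q.
have sN : SU2 N := SU2_conj UQ sW.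
have N0 : N i0 i0 = 0.
  rewrite /N /Q Qmx_entry -(v2E (u0 M)) /W Ex Ey adjmxZ adjmxK.
  rewrite -(scalemxAl sx (adjmx (Aprod M x))) -(scalemxAr sy^* (adjmx (Aprod M x))).
  rewrite scalerA -(scalemxAl (sx * sy^*)) -(scalemxAr (sx * sy^*)) mxE.
  rewrite -mulmxA (mulmxA (adjmx (u0 M))) -adjmxM -!final_Aprod.
  by move: orth; rewrite /ip => ->; rewrite mulr0.
have [R [UR HR]] := fin_N sN N0.
set V := Q *m R.
have UV : unitary V := unitaryM UQ UR.
exists (adjmx V *m ga *m V), (adjmx V *m gb *m V).
have sga := SU2_conj UV sa; have sgb := SU2_conj UV sb.
split => //; split => //.
rewrite wm_omega ?SU2_unit // !wm_pos_conj // -/X -/Y.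
rewrite invmx_unitary; last by case: (SU2_conj UV sY).
rewrite !adjmxM adjmxK !mulmxA adjmxK -(mulmxA _ R (adjmx R)) UR mulmx1.
rewrite -(mulmxA _ Q (adjmx Q)) UQ mulmx1 -HR /N /W !mulmxA.
done.
Qed.

End M2.

Theorem fact1 (C : numClosedFieldType) (x y : seq letter) :
  x <> y ->
  ((exists M : MCQFA C, MCQFA_wf M /\ separates_exactly M x y) <->
   (exists g h : 'M[C]_2, SU2 g /\ SU2 h /\
      word_map (omega x y) g h = diag_i_mi C)).
Proof.
move=> _; split.
  by move=> [M [wf sep]]; exact: forward wf sep.
by move=> [g [h [sg [sh E]]]]; exact: backward sg sh E.
Qed.
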